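(* Let $\ell\ge1$, $N=2^\ell$, let ${\mathbf x}_0,\dots,{\mathbf x}_{\omega-1}\in\mathbb{F}_2^\ell$ be distinct, and $D=P_{{\mathbf x}_0}+\cdots+P_{{\mathbf x}_{\omega-1}}$. Let $R$ be the number of ordered pairs $\big((u,v,w),(u',v',w')\big)$ of triples of indices in $\{0,\dots,\omega-1\}$ with $u\ne v$, $v\ne w$, $u'\ne v'$, $v'\ne w'$, $u\ne u'$, $w\ne w'$, and ${\mathbf x}_u+{\mathbf x}_v+{\mathbf x}_w={\mathbf x}_{u'}+{\mathbf x}_{v'}+{\mathbf x}_{w'}$. Then the number of $6$-cycles in the Tanner graph of $D$ is $\mathcal{N}_6=\dfrac{2^\ell}{6}\,R$.
   Context: Rows and columns of $N\times N$ binary matrices are indexed by $\mathbb{F}_2^\ell$ via ${\mathbf x}=(x_1,\dots,x_\ell)\leftrightarrow 1+\sum_i x_i2^{i-1}$. For ${\mathbf a}\in\mathbb{F}_2^\ell$, $P_{\mathbf a}$ is the $N\times N$ binary matrix with $(P_{\mathbf a})_{{\mathbf x},{\mathbf y}}=1$ iff ${\mathbf y}={\mathbf x}+{\mathbf a}$. The Tanner graph of a binary matrix is the bipartite graph with check nodes = rows, variable nodes = columns, edges at the $1$-entries. A $k$-cycle is a closed walk of $k$ edges with distinct vertices and distinct edges. *)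

(* Defs.v *)
From mathcomp Require Import all_boot all_order all_algebra.
Set Implicit Arguments. Unset Strict Implicit. Unset Printing Implicit Defensive.
Import GRing.Theory.
Local Open Scope ring_scope.

(* F_2^l, used as the index set of rows and columns of N x N binary matrices,
   N = 2^l (the bijection with {1..N} is only a labeling). *)
Definition F2vec (l : nat) := 'rV['F_2]_l.

Definition bmat (l : nat) := F2vec l -> F2vec l -> 'F_2.

Definition Pmat (l : nat) (a : F2vec l) : bmat l :=
  fun x y => (y == x + a)%:R.

Definition Dmat (l om : nat) (xs : 'I_om -> F2vec l) : bmat l :=
  fun x y => \sum_(i < om) Pmat (xs i) x y.

(* Tanner graph: vertices = check nodes (inl row) + variable nodes (inr col). *)
Definition tvertex (l : nat) := (F2vec l + F2vec l)%type.

Definition tadj (l : nat) (H : bmat l) (p q : tvertex l) : bool :=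
  match p, q with
  | inl x, inr y => H x y == 1
  | inr y, inl x => H x y == 1
  | _, _ => false
  end.

Definition walk_edge (l k : nat) (w : {ffun 'I_k -> tvertex l}) (i : 'I_k)
  : {set tvertex l} := [set w i; w (ordS i)].

Definition cycle_walk (l : nat) (H : bmat l) (k : nat)
  (w : {ffun 'I_k -> tvertex l}) : bool :=
  [&& [forall i, tadj H (w i) (w (ordS i))],
      injectiveb w & injectiveb (walk_edge w)].

(* The k-cycles of the Tanner graph of H, as subgraphs (edge sets). *)
Definition kcycles (l : nat) (H : bmat l) (k : nat) : {set {set {set tvertex l}}} :=
  [set E | [exists w : {ffun 'I_k -> tvertex l},
             cycle_walk H w && (E == [set walk_edge w i | i : 'I_k])]].

Definition Rpred (l om : nat) (xs : 'I_om -> F2vec l)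
  (t : ('I_om * 'I_om * 'I_om) * ('I_om * 'I_om * 'I_om)) : bool :=
  let: ((u, v, w), (u', v', w')) := t in
  [&& u != v, v != w, u' != v', v' != w', u != u', w != w' &
      xs u + xs v + xs w == xs u' + xs v' + xs w'].

Definition Rcount (l om : nat) (xs : 'I_om -> F2vec l) : nat :=
  #|[set t | Rpred xs t]|.

(* Main.v *)
Require Import Defs.
From mathcomp Require Import all_boot all_order all_algebra.
From mathcomp Require Import zify.
Set Implicit Arguments. Unset Strict Implicit. Unset Printing Implicit Defensive.
Import GRing.Theory.
Local Open Scope ring_scope.

Notation s := (@ordS 6).
Ltac o6 := let p := fresh in case=> [[|[|[|[|[|[|//]]]]]] p].
Lemma B1 (i j : 'I_6) : i + s j = s (i + j).
Proof. apply/val_inj; move: i j; o6; o6; by []. Qed.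
Lemma B2 (i j : 'I_6) : i - j = s (i - s j).
Proof. apply/val_inj; move: i j; o6; o6; by []. Qed.
Lemma B3 (i m : 'I_6) : i - s (i - s m) = m.
Proof. apply/val_inj; move: i m; o6; o6; by []. Qed.
Lemma B4 (i : 'I_6) : s (s i) != i.
Proof. move: i; o6; by []. Qed.
Lemma B5 (i : 'I_6) : s i != i.
Proof. move: i; o6; by []. Qed.
Lemma B6 (m : 'I_6) : s m - s 0 = m.
Proof. apply/val_inj; move: m; o6; by []. Qed.
Lemma B7 (i : 'I_6) : i + s 0 != i - s 0.
Proof. move: i; o6; by []. Qed.
Lemma B8 (i : 'I_6) : iter i s ord0 = i.
Proof. apply/val_inj; move: i; o6; by []. Qed.

Lemma set2_eq (T : finType) (a b c d : T) :
  [set a; b] = [set c; d] -> a != b -> (a = c /\ b = d) \/ (a = d /\ b = c).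
Proof.
move=> E ab.
have : a \in [set c; d] by rewrite -E set21.
have : b \in [set c; d] by rewrite -E set22.
move=> /set2P[] Hb /set2P[] Ha; subst.
- by rewrite eqxx in ab.
- by right.
- by left.
- by rewrite eqxx in ab.
Qed.

Definition es l (w : {ffun 'I_6 -> tvertex l}) := [set walk_edge w i | i : 'I_6].

Lemma tadjC l (H : bmat l) p q : tadj H p q = tadj H q p.
Proof. by case: p; case: q. Qed.

Lemma edge_inj l (w : {ffun 'I_6 -> tvertex l}) : injective w -> injectiveb (walk_edge w).
Proof.
move=> wi; apply/injectiveP => i j /set2_eq [].
- by rewrite (inj_eq wi) eq_sym B5.
- by case=> /wi.
- case=> /wi -> /wi E; by move: (B4 j); rewrite E eqxx.
Qed.

Lemma cw_intro l (H : bmat l) (w : {ffun 'I_6 -> tvertex l}) :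
  (forall i, tadj H (w i) (w (s i))) -> injective w -> cycle_walk H w.
Proof.
move=> a wi; apply/and3P; split; first by apply/forallP.
  by apply/injectiveP.
exact: edge_inj.
Qed.

Lemma cw_adj l (H : bmat l) (w : {ffun 'I_6 -> tvertex l}) :
  cycle_walk H w -> forall i, tadj H (w i) (w (s i)).
Proof. by case/and3P => /forallP. Qed.

Lemma cw_inj l (H : bmat l) (w : {ffun 'I_6 -> tvertex l}) :
  cycle_walk H w -> injective w.
Proof. by case/and3P => _ /injectiveP. Qed.

Lemma det l (H : bmat l) (w v : {ffun 'I_6 -> tvertex l}) :
  cycle_walk H w -> cycle_walk H v -> es v = es w ->
  v ord0 = w ord0 -> v (s ord0) = w (s ord0) -> v = w.
Proof.
move=> cw cv E h0 h1.
have wi := cw_inj cw; have vi := cw_inj cv.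
have step j : v j = w j -> v (s j) = w (s j) -> v (s (s j)) = w (s (s j)).
  move=> e0 e1.
  have : walk_edge v (s j) \in es w by rewrite -E; apply: imset_f.
  case/imsetP => m _ /set2_eq [].
  - by rewrite (inj_eq vi) eq_sym B5.
  - by case; rewrite e1 => /wi <-.
  - case; rewrite e1 => /wi /ordS_inj <-; rewrite -e0 => /vi E2.
    by move: (B4 j); rewrite E2 eqxx.
have Q n : v (iter n s ord0) = w (iter n s ord0) /\ v (iter n.+1 s ord0) = w (iter n.+1 s ord0).
  elim: n => [|n [IH1 IH2]]; first by split.
  split => //=; exact: step.
apply/ffunP => i; have := (Q i).1; by rewrite B8.
Qed.

Definition rotw l (i : 'I_6) (w : {ffun 'I_6 -> tvertex l}) := [ffun j => w (i + j)].
Definition refw l (i : 'I_6) (w : {ffun 'I_6 -> tvertex l}) := [ffun j => w (i - j)].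

Lemma rot_cw l (H : bmat l) i (w : {ffun 'I_6 -> tvertex l}) :
  cycle_walk H w -> cycle_walk H (rotw i w) /\ es (rotw i w) = es w.
Proof.
move=> cw; have wi := cw_inj cw.
have we j : walk_edge (rotw i w) j = walk_edge w (i + j).
  by rewrite /walk_edge !ffunE B1.
split.
  apply: cw_intro => [j|a b]; rewrite !ffunE.
    by rewrite B1; apply: cw_adj.
  by move/wi/addrI.
apply/setP => E; apply/imsetP/imsetP => [[j _ ->]|[j _ ->]].
  by exists (i + j) => //; rewrite we.
by exists (j - i) => //; rewrite we (addrC i) subrK.
Qed.

Lemma ref_cw l (H : bmat l) i (w : {ffun 'I_6 -> tvertex l}) :
  cycle_walk H w -> cycle_walk H (refw i w) /\ es (refw i w) = es w.
Proof.
move=> cw; have wi := cw_inj cw.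
have we j : walk_edge (refw i w) j = walk_edge w (i - s j).
  by rewrite /walk_edge !ffunE (B2 i j) setUC.
split.
  apply: cw_intro => [j|a b]; rewrite !ffunE.
    by rewrite (B2 i j) tadjC; apply: cw_adj.
  by move/wi/addrI/oppr_inj.
apply/setP => E; apply/imsetP/imsetP => [[j _ ->]|[j _ ->]].
  by exists (i - s j) => //; rewrite we.
by exists (i - s j) => //; rewrite we B3.
Qed.

Definition hd l (w0 : {ffun 'I_6 -> tvertex l}) (p : 'I_6 * bool) :=
  if p.2 then rotw p.1 w0 else refw p.1 w0.

Lemma fiber_card l (H : bmat l) (w0 : {ffun 'I_6 -> tvertex l}) :
  cycle_walk H w0 ->
  #|[set w | cycle_walk H w && (es w == es w0)]| = 12%N.
Proof.
move=> c0; have wi := cw_inj c0.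
have hF p : cycle_walk H (hd w0 p) /\ es (hd w0 p) = es w0.
  by case: p => i [] /=; [apply: rot_cw | apply: ref_cw].
have -> : [set w | cycle_walk H w && (es w == es w0)] = hd w0 @: setT.
  apply/setP => w; rewrite inE; apply/idP/imsetP => [/andP[cw /eqP E]|[p _ ->]].
    have wj := cw_inj cw.
    have : walk_edge w ord0 \in es w0 by rewrite -E; apply: imset_f.
    case/imsetP => m _ /set2_eq [].
    - by rewrite (inj_eq wj) eq_sym B5.
    - case=> e0 e1; exists (m, true) => //.
      have [c1 E1] := hF (m, true); rewrite /hd /= in c1 E1 *.
      apply: (det c1 cw); first by rewrite E1.
        by rewrite /= ffunE addr0.
      by rewrite /= ffunE B1 addr0.
    - case=> e0 e1; exists (s m, false) => //.
      have [c1 E1] := hF (s m, false); rewrite /hd /= in c1 E1 *.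
      apply: (det c1 cw); first by rewrite E1.
        by rewrite /= ffunE subr0.
      by rewrite /= ffunE B6.
  by have [c1 /eqP E1] := hF p; rewrite c1.
rewrite card_imset ?cardsT ?card_prod ?card_ord ?card_bool //.
move=> [i b] [j c] /ffunP E.
have E0 := E ord0; rewrite /hd /= in E0.
have E1 := E (s ord0); rewrite /hd /= in E1; clear E.
have Eij : i = j.
  by move: E1; case: b c E0 => [] [] /= E0 _; move: E0; rewrite !ffunE ?addr0 ?subr0 => /wi.
subst j; congr pair.
clear E0; case: b c E1 => [] [] //=; rewrite !ffunE => /wi /eqP.
  by rewrite (negbTE (B7 i)).
by rewrite eq_sym (negbTE (B7 i)).
Qed.

Definition allw l (H : bmat l) := [set w : {ffun 'I_6 -> tvertex l} | cycle_walk H w].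

Lemma kc_all l (H : bmat l) : kcycles H 6 = (@es l) @: allw H.
Proof.
apply/setP => E; rewrite inE; apply/existsP/imsetP.
  by case=> w /andP[cw /eqP ->]; exists w; rewrite ?inE.
by case=> w; rewrite inE => cw ->; exists w; rewrite cw eqxx.
Qed.

Lemma all_card l (H : bmat l) : #|allw H| = (#|kcycles H 6| * 12)%N.
Proof.
rewrite kc_all -sum1_card (partition_big_imset (@es l)) /=.
rewrite -sum_nat_const; apply: eq_bigr => E /imsetP [w0 w0in ->].
rewrite -(@fiber_card _ H w0); last by move: w0in; rewrite inE.
rewrite -sum1_card; apply: eq_bigl => w; by rewrite !inE.
Qed.

Definition isl l (p : tvertex l) := if p is inl _ then true else false.

Definition W l (H : bmat l) := [set w : {ffun 'I_6 -> tvertex l} | (w \in allw H) && isl (w ord0)].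

Lemma allW l (H : bmat l) : #|allw H| = (2 * #|W H|)%N.
Proof.
rewrite -(cardsID [set w : {ffun 'I_6 -> tvertex l} | isl (w ord0)] (allw H)).
have -> : allw H :&: [set w : {ffun 'I_6 -> tvertex l} | isl (w ord0)] = W H.
  by apply/setP => w; rewrite !inE.
suff -> : #|allw H :\: [set w : {ffun 'I_6 -> tvertex l} | isl (w ord0)]| = #|W H| by rewrite mul2n addnn.
have rinj : injective (@rotw l (s ord0)).
  move=> a b /ffunP E; apply/ffunP => j; have := E (j - s ord0).
  by rewrite !ffunE (addrC (s ord0)) subrK.
have sw w : cycle_walk H w -> isl (w (s ord0)) = ~~ isl (w ord0).
  move/cw_adj/(_ ord0); by case: (w ord0); case: (w (s ord0)).
apply/eqP; rewrite eqn_leq; apply/andP; split.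
  rewrite -(card_imset _ rinj); apply: subset_leq_card; apply/subsetP => v.
  case/imsetP => w; rewrite !inE => /andP [Hl cw] ->.
  have [cr _] := rot_cw (s ord0) cw.
  by rewrite cr ffunE addr0 sw // Hl.
rewrite -(card_imset _ rinj); apply: subset_leq_card; apply/subsetP => v.
case/imsetP => w; rewrite !inE => /andP [cw Hl] ->.
have [cr _] := rot_cw (s ord0) cw.
by rewrite cr ffunE addr0 sw // Hl.
Qed.

Lemma F2dbl (a : 'F_2) : a + a = 0.
Proof. exact: addrr_pchar2 (pchar_Fp (isT : prime 2)) a. Qed.
Lemma dbl l (x : F2vec l) : x + x = 0.
Proof. by apply/matrixP => i j; rewrite !mxE F2dbl. Qed.

Lemma oppF l (x : F2vec l) : - x = x.
Proof. by apply/eqP; rewrite eq_sym -subr_eq0 opprK dbl. Qed.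

Lemma addK2 l (x y : F2vec l) : x + y + y = x.
Proof. by rewrite -addrA dbl addr0. Qed.
Lemma Dadj l om (xs : 'I_om -> F2vec l) : injective xs -> forall x y,
  (Dmat xs x y == 1) = [exists i, y == x + xs i].
Proof.
move=> inj x y; rewrite /Dmat /Pmat.
case: existsP => [[i /eqP Hi]|Hn].
  rewrite (bigD1 i) //= Hi eqxx. 
  rewrite big1; first by rewrite addr0 eqxx.
  move=> j ji.
  case: eqP => [/addrI /inj E|_]; last by [].
  by rewrite E eqxx in ji.
rewrite big1; first by rewrite eq_sym oner_eq0.
move=> j _.
case: eqP => [E|]; last by [].
case: Hn; exists j; exact/eqP.
Qed.
Lemma adjLR l om (xs : 'I_om -> F2vec l) : injective xs -> forall x y,
  tadj (Dmat xs) (inl x) (inr y) = [exists i, y == x + xs i].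
Proof. move=> inj x y; exact: Dadj inj x y. Qed.

Lemma adjRL l om (xs : 'I_om -> F2vec l) : injective xs -> forall x y,
  tadj (Dmat xs) (inr y) (inl x) = [exists i, y == x + xs i].
Proof. move=> inj x y; exact: Dadj inj x y. Qed.
Lemma adjLL l (H : bmat l) x y : tadj H (inl x) (inl y) = false. Proof. by []. Qed.
Lemma adjRR l (H : bmat l) x y : tadj H (inr x) (inr y) = false. Proof. by []. Qed.

Notation i0 := (@ord0 5).
Notation i1 := (s i0).
Notation i2 := (s i1).
Notation i3 := (s i2).
Notation i4 := (s i3).
Notation i5 := (s i4).
Lemma s6 : s i5 = i0. Proof. by apply/val_inj. Qed.
Lemma all6 (i : 'I_6) : i = i0 \/ i = i1 \/ i = i2 \/ i = i3 \/ i = i4 \/ i = i5.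
Proof.
move: i; o6; [left|right;left|right;right;left|do 3 right; left|do 4 right; left|do 5 right];
  by apply/val_inj.
Qed.

Lemma add3 l (c a b d : F2vec l) : c + a + b + d = c + (a + b + d).
Proof. by rewrite !addrA. Qed.
Lemma neq_add l (c a : F2vec l) : (c == c + a) = (a == 0).
Proof. by rewrite -{1}(addr0 c) (inj_eq (addrI c)) eq_sym. Qed.
Lemma sum0 l (a b : F2vec l) : (a + b == 0) = (a == b).
Proof. by rewrite addr_eq0 oppF. Qed.

Definition T6 om := (('I_om * 'I_om * 'I_om) * ('I_om * 'I_om * 'I_om))%type.

Definition phiv l om (xs : 'I_om -> F2vec l) (c : F2vec l) (t : T6 om) : seq (tvertex l) :=
  let: ((u, v, w), (u', v', w')) := t in
  [:: inl c; inr (c + xs u); inl (c + xs u + xs v); inr (c + xs u + xs v + xs w);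
      inl (c + xs u' + xs v'); inr (c + xs u')].

Definition Phi l om (xs : 'I_om -> F2vec l) (p : F2vec l * T6 om) : {ffun 'I_6 -> tvertex l} :=
  [ffun j : 'I_6 => nth (inl p.1) (phiv xs p.1 p.2) j].

Lemma Phi_in l om (xs : 'I_om -> F2vec l) (inj : injective xs) c t :
  Rpred xs t -> Phi xs (c, t) \in W (Dmat xs).
Proof.
case: t => [[[u v] w] [[u' v'] w']].
case/and5P => uv vw uv' vw' /and3P [uu' ww' /eqP E].
have P0 : Phi xs (c, ((u,v,w),(u',v',w'))) i0 = inl c by rewrite ffunE.
have P1 : Phi xs (c, ((u,v,w),(u',v',w'))) i1 = inr (c + xs u) by rewrite ffunE.
have P2 : Phi xs (c, ((u,v,w),(u',v',w'))) i2 = inl (c + xs u + xs v) by rewrite ffunE.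
have P3 : Phi xs (c, ((u,v,w),(u',v',w'))) i3 = inr (c + xs u + xs v + xs w) by rewrite ffunE.
have P4 : Phi xs (c, ((u,v,w),(u',v',w'))) i4 = inl (c + xs u' + xs v') by rewrite ffunE.
have P5 : Phi xs (c, ((u,v,w),(u',v',w'))) i5 = inr (c + xs u') by rewrite ffunE.
rewrite !inE P0 andbT; apply: cw_intro.
  move=> i; case: (all6 i) => [->|[->|[->|[->|[->|->]]]]];
    rewrite ?s6 ?P0 ?P1 ?P2 ?P3 ?P4 ?P5 ?adjLR ?adjRL //; apply/existsP.
  - by exists u.
  - by exists v; rewrite addK2.
  - by exists w.
  - by exists w'; rewrite add3 E -add3.
  - by exists v'; rewrite addK2.
  - by exists u'.
have f02 : (c == c + xs u + xs v) = false.
  by rewrite -addrA neq_add sum0 (inj_eq inj) (negbTE uv).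
have f04 : (c == c + xs u' + xs v') = false.
  by rewrite -addrA neq_add sum0 (inj_eq inj) (negbTE uv').
have f13 : (c + xs u == c + xs u + xs v + xs w) = false.
  by rewrite -(addrA (c + xs u)) neq_add sum0 (inj_eq inj) (negbTE vw).
have f15 : (c + xs u == c + xs u') = false.
  by rewrite (inj_eq (addrI c)) (inj_eq inj) (negbTE uu').
have f24 : (c + xs u + xs v == c + xs u' + xs v') = false.
  apply/negbTE/eqP; rewrite -!addrA => /addrI Q.
  move: E; rewrite Q => /addrI /inj Q2; by rewrite Q2 eqxx in ww'.
have f35 : (c + xs u + xs v + xs w == c + xs u') = false.
  rewrite add3 E -add3 eq_sym -(addrA (c + xs u')) neq_add sum0.
  by rewrite (inj_eq inj) (negbTE vw').
move=> a b; case: (all6 a) => [->|[->|[->|[->|[->|->]]]]];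
  case: (all6 b) => [->|[->|[->|[->|[->|->]]]]];
  rewrite ?P0 ?P1 ?P2 ?P3 ?P4 ?P5 => // Heq; case: Heq => /eqP;
  rewrite ?f02 ?f04 ?f13 ?f15 ?f24 ?f35 //;
  rewrite eq_sym ?f02 ?f04 ?f13 ?f15 ?f24 ?f35 //.
Qed.

Lemma solve2 l (y z a : F2vec l) : y = z + a -> z = y + a.
Proof. by move=> ->; rewrite addK2. Qed.

Lemma W_Phi l om (xs : 'I_om -> F2vec l) (inj : injective xs) f :
  f \in W (Dmat xs) -> exists c t, Rpred xs t /\ f = Phi xs (c, t).
Proof.
rewrite !inE => /andP [cw Hl].
have nI (a b : 'I_6) : f a = f b -> a = b := @cw_inj _ _ _ cw a b.
have a0 := cw_adj cw i0; have a1 := cw_adj cw i1; have a2 := cw_adj cw i2.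
have a3 := cw_adj cw i3; have a4 := cw_adj cw i4; have a5 := cw_adj cw i5.
rewrite s6 in a5.
case E0: (f i0) Hl => [c|] // _; rewrite E0 in a0 a5.
case E1: (f i1) a0 a1 => [?|y1]; first by rewrite adjLL.
rewrite adjLR // => /existsP [u /eqP e1] a1.
case E2: (f i2) a1 a2 => [z2|?]; last by rewrite adjRR.
rewrite adjRL // => /existsP [v /eqP /solve2 e2] a2.
case E3: (f i3) a2 a3 => [?|y3]; first by rewrite adjLL.
rewrite adjLR // => /existsP [w /eqP e3] a3.
case E4: (f i4) a3 a4 => [z4|?]; last by rewrite adjRR.
rewrite adjRL // => /existsP [w' /eqP e4] a4.
case E5: (f i5) a4 a5 => [?|y5]; first by rewrite adjLL.
rewrite adjLR // adjRL // => /existsP [v' /eqP /solve2 e6] /existsP [u' /eqP e5].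
subst y1; subst z2; subst y5; subst z4.
rewrite e3 in e4 E3.
have e4' := e4.
have E : xs u + xs v + xs w = xs u' + xs v' + xs w'.
  by apply: (@addrI _ c); rewrite -!add3 e4.
have neq (a b : 'I_6) : val a != val b -> f a <> f b.
  by move=> ab /nI Q; rewrite Q eqxx in ab.
exists c, ((u, v, w), (u', v', w')); split; last first.
  apply/ffunP => i; rewrite ffunE.
  by case: (all6 i) => [->|[->|[->|[->|[->|->]]]]]; rewrite ?E0 ?E1 ?E2 ?E3 ?E4 ?E5.
apply/and5P; split; [| | | | apply/and3P; split; last exact/eqP].
- apply/negP => /eqP Q; apply: (@neq i2 i0) => //.
  by rewrite E2 E0 Q addK2.
- apply/negP => /eqP Q; apply: (@neq i3 i1) => //.
  by rewrite E3 E1 Q addK2.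
- apply/negP => /eqP Q; apply: (@neq i4 i0) => //.
  by rewrite E4 E0 Q addK2.
- apply/negP => /eqP Q; apply: (@neq i3 i5) => //.
  by rewrite E3 e4' E5 Q addK2.
- apply/negP => /eqP Q; apply: (@neq i1 i5) => //.
  by rewrite E1 E5 Q.
- apply/negP => /eqP Q; apply: (@neq i2 i4) => //.
  rewrite E2 E4; congr inl; rewrite -!addrA; congr (c + _).
  by move: E; rewrite Q => /addIr.
Qed.

Lemma W_card l om (xs : 'I_om -> F2vec l) (inj : injective xs) :
  #|W (Dmat xs)| = (2 ^ l * Rcount xs)%N.
Proof.
have -> : W (Dmat xs) = Phi xs @: setX [set: F2vec l] [set t | Rpred xs t].
  apply/setP => f; apply/idP/imsetP.
    case/(W_Phi inj) => c [t [Rt ->]]; exists (c, t) => //.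
    by rewrite !inE Rt.
  case=> [[c t]]; rewrite !inE /= => Rt ->; have := Phi_in inj c Rt; by rewrite !inE.
rewrite card_in_imset.
  by rewrite cardsX cardsT card_mx card_Fp // mul1n.
move=> [c t] [c' t']; rewrite !inE /= => Rt Rt' /ffunP E.
move: Rt Rt' E.
case: t => [[[u v] w] [[u' v'] w']]; case: t' => [[[u2 v2] w2] [[u2' v2' w2']]].
case/and5P => _ _ _ _ /and3P [_ _ /eqP Eq].
case/and5P => _ _ _ _ /and3P [_ _ /eqP Eq2] E.
have := E i0; rewrite !ffunE /= => -[?]; subst c'.
have := E i1; rewrite !ffunE /= => -[/addrI /inj ?]; subst u2.
have := E i2; rewrite !ffunE /= => -[/addrI /inj ?]; subst v2.
have := E i3; rewrite !ffunE /= => -[/addrI /inj ?]; subst w2.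
have := E i5; rewrite !ffunE /= => -[/addrI /inj ?]; subst u2'.
have := E i4; rewrite !ffunE /= => -[/addrI /inj ?]; subst v2'.
by move: Eq; rewrite Eq2 => /addrI /inj ->.
Qed.

Theorem mainTheorem13 (l om : nat) (xs : 'I_om -> F2vec l) :
  (1 <= l)%N -> injective xs ->
  (#|kcycles (Dmat xs) 6|%:R : rat)
    = ((2 ^ l)%N%:R / 6%:R * (Rcount xs)%:R)%R.
Proof.
move=> _ inj.
have := all_card (Dmat xs); rewrite allW W_card // => Hn.
have Hn' : (#|kcycles (Dmat xs) 6| * 6 = 2 ^ l * Rcount xs)%N by lia.
have H : (#|kcycles (Dmat xs) 6|%:R * 6%:R : rat) = (2 ^ l)%N%:R * (Rcount xs)%:R.
  by rewrite -!natrM Hn'.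
by rewrite mulrAC -H mulfK.
Qed.
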